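(* Let $d\in\mathbb{N}$, $b_0:=1$, $\beta_0:=1$, and let $n_{(0)}:=0\le n_{(1)}\le\cdots\le n_{(d)}$ denote the ordered list of $n_1,\ldots,n_d\in\mathbb{N}_0$. (N) $\mathcal{G}^{\mathcal N,\mathcal E}=\big\{\bar F=\prod_{k=1}^d a_k^{n_{(d-k+1)}}: (a_k)_{k=1}^d \text{ extends to } (a_k)_{k\in\mathbb{N}}\in\mathcal{SM}_\infty\big\}=\big\{\bar F=\prod_{k=1}^d b_k^{n_{(d-k+1)}-n_{(d-k)}}: (b_k)_{k=0}^d\text{ extends to }(b_k)_{k\in\mathbb{N}_0}\in\mathcal{LM}_\infty\big\}.$ (W) $\mathcal{G}^{\mathcal W,\mathcal E}=\big\{\bar F=\prod_{k=1}^d \beta_k^{n_{(d-k+1)}-n_{(d-k)}}: (\beta_k)_{k=0}^d\text{ extends to }(\beta_k)_{k\in\mathbb{N}_0}\in\mathcal{M}_\infty\big\}.$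
   Context: Narrow-sense geometric law: for $p_I\in[0,1]$, $\emptyset\ne I\subseteq\{1,\ldots,m\}$, with $\prod_{I\ni k}p_I<1$, take independent $E_I$ with $\mathbb{P}(E_I>n)=p_I^n$, $\tau_k=\min\{E_I:k\in I\}$. Wide-sense geometric law: for $\tilde p_I\in[0,1]$, $I\subseteq\{1,\ldots,m\}$, $\sum_I\tilde p_I=1$, $\sum_{I\not\ni k}\tilde p_I<1$, run i.i.d. trials with outcome $I$ of probability $\tilde p_I$, $\tilde E_I$ the first trial with outcome $I$, $\tau_k=\min\{\tilde E_I:k\in I\}$. $\mathcal{G}^{\mathcal N,\mathcal E}$ (resp. $\mathcal{G}^{\mathcal W,\mathcal E}$) is the set of survival functions $\mathbb{P}(\tau_1>n_1,\ldots,\tau_d>n_d)$ of $d$-variate laws (for the narrow sense: other than the point mass at $(1,\ldots,1)$) for which there is an infinite exchangeable sequence $(\tau_k)_{k\in\mathbb{N}}$ of $\mathbb{N}$-valued random variables such that $(\tau_1,\ldots,\tau_d)$ has this law and, for every $m\in\mathbb{N}$, $(\tau_1,\ldots,\tau_m)$ has an exchangeable narrow-sense (resp. wide-sense) geometric law. $\nabla^jx_k:=\sum_{i=0}^j(-1)^i\binom{j}{i}x_{k+i}$. $\mathcal{M}_\infty:=\{(x_k)_{k\in\mathbb{N}_0}\in\mathbb{R}^{\mathbb{N}_0}: x_0=1, x_1<1, \nabla^jx_k\ge0\ \forall j,k\in\mathbb{N}_0\}$. $\mathcal{LM}_\infty:=\{(x_k)_{k\in\mathbb{N}_0}\in(0,\infty)^{\mathbb{N}_0}: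 x_0=1,x_1<1,\nabla^j\ln x_k\ge0\ \forall k\in\mathbb{N}_0, j\in\mathbb{N}\}$. $\mathcal{SM}_\infty:=\{(x_k)\in(0,\infty)^{\mathbb{N}_0}: x_0<1, (\ln x_k^{-1})_k \text{ completely monotone, i.e. } \nabla^j\ln x_k^{-1}\ge 0\ \forall j,k\in\mathbb{N}_0\}$ (applied to $(a_k)_{k\ge1}$ after re-indexing from $0$). *)

(* Defs.v *)
From Stdlib Require Import Reals.
From mathcomp Require Import all_boot.
Set Implicit Arguments. Unset Strict Implicit. Unset Printing Implicit Defensive.
Open Scope R_scope.

Definition nabla (j : nat) (x : nat -> R) (k : nat) : R :=
  \big[Rplus/0]_(i < j.+1) ((-1) ^ i * INR 'C(j, i) * x (k + i)%N).

Definition Minf (x : nat -> R) : Prop :=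
  x 0%N = 1 /\ (x 1%N < 1) /\ forall j k : nat, (0 <= nabla j x k).

Definition LMinf (x : nat -> R) : Prop :=
  (forall k, 0 < x k) /\ x 0%N = 1 /\ (x 1%N < 1) /\
  forall k j : nat, (0 < j)%N -> (0 <= nabla j (fun i => ln (x i)) k).

(* SM_infinity (sequence indexed from 0) *)
Definition SMinf (x : nat -> R) : Prop :=
  (forall k, 0 < x k) /\ (x 0%N < 1) /\
  forall j k : nat, (0 <= nabla j (fun i => ln (/ x i)) k).

(* Narrow sense: P(tau > n) = prod_{I <> empty} P(E_I > max_{k in I} n_k)
                             = prod_{I <> empty} p_I ^ (max_{k in I} n_k). *)
Definition narrow_params (m : nat) (p : {set 'I_m} -> R) : Prop :=
  (forall I : {set 'I_m}, I != set0 -> (0 <= p I <= 1)) /\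
  (forall k : 'I_m,
      (\big[Rmult/1]_(I : {set 'I_m} | (I != set0) && (k \in I)) p I < 1)).

Definition narrow_surv (m : nat) (p : {set 'I_m} -> R) (n : m.-tuple nat) : R :=
  \big[Rmult/1]_(I : {set 'I_m} | I != set0)
     (p I ^ (\max_(k in I) tnth n k)%N).

Definition is_narrow_geom (m : nat) (S : m.-tuple nat -> R) : Prop :=
  exists p : {set 'I_m} -> R, narrow_params p /\ forall n, S n = narrow_surv p n.

(* Wide sense: i.i.d. trials with outcome I w.p. pt_I; tau_k > n_k iff no trial
   t <= n_k has an outcome containing k; so
   P(tau > n) = prod_{t=1}^{max n} sum_{I : forall k in I, n_k < t} pt_I. *)
Definition wide_params (m : nat) (pt : {set 'I_m} -> R) : Prop :=
  (forall I : {set 'I_m}, (0 <= pt I <= 1)) /\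
  \big[Rplus/0]_(I : {set 'I_m}) pt I = 1 /\
  (forall k : 'I_m, (\big[Rplus/0]_(I : {set 'I_m} | k \notin I) pt I < 1)).

Definition wide_surv (m : nat) (pt : {set 'I_m} -> R) (n : m.-tuple nat) : R :=
  \big[Rmult/1]_(1 <= t < (\max_(k < m) tnth n k)%N.+1)
     (\big[Rplus/0]_(I : {set 'I_m} | [forall k in I, (tnth n k < t)%N]) pt I).

Definition is_wide_geom (m : nat) (S : m.-tuple nat -> R) : Prop :=
  exists pt : {set 'I_m} -> R, wide_params pt /\ forall n, S n = wide_surv pt n.

Definition exchangeable (m : nat) (S : m.-tuple nat -> R) : Prop :=
  forall n n' : m.-tuple nat, perm_eq n n' -> S n = S n'.

(* survival function of the point mass at (1,...,1) *)
Definition pointmass_surv (d : nat) (n : d.-tuple nat) : R :=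
  if all (fun x => x == 0%N) n then 1 else 0.

(* A consistent family (S_m)_{m>=1} of finite-dimensional survival functions
   (laws of (tau_1,...,tau_m)), each exchangeable and of the given geometric type.
   By Kolmogorov's extension theorem this is exactly an infinite exchangeable
   sequence whose m-marginals have exchangeable geometric laws. *)
Definition geom_family (G : forall m, (m.-tuple nat -> R) -> Prop)
    (S : forall m, m.-tuple nat -> R) : Prop :=
  (forall m, (0 < m)%N -> exchangeable (S m) /\ G m (S m)) /\
  (forall m (n : m.-tuple nat), (0 < m)%N -> S m.+1 (rcons_tuple n 0%N) = S m n).

Definition GNE (d : nat) (F : d.-tuple nat -> R) : Prop :=
  ~ (forall n, F n = pointmass_surv n) /\
  exists S, geom_family is_narrow_geom S /\ forall n, F n = S d n.

Definition GWE (d : nat) (F : d.-tuple nat -> R) : Prop :=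
  exists S, geom_family is_wide_geom S /\ forall n, F n = S d n.

(* order statistics: os n 0 = 0 <= os n 1 <= ... <= os n d *)
Definition os (n : seq nat) (j : nat) : nat := nth 0%N (0%N :: sort leq n) j.

Definition RHS_N1 (d : nat) (F : d.-tuple nat -> R) : Prop :=
  exists a : nat -> R, SMinf (fun k => a k.+1) /\
  forall n : d.-tuple nat,
    F n = \big[Rmult/1]_(1 <= k < d.+1) (a k ^ os n (d - k)%N.+1).

Definition RHS_N2 (d : nat) (F : d.-tuple nat -> R) : Prop :=
  exists b : nat -> R, LMinf b /\
  forall n : d.-tuple nat,
    F n = \big[Rmult/1]_(1 <= k < d.+1)
            (b k ^ (os n (d - k).+1 - os n (d - k))%N).

Definition RHS_W (d : nat) (F : d.-tuple nat -> R) : Prop :=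
  exists beta : nat -> R, Minf beta /\
  forall n : d.-tuple nat,
    F n = \big[Rmult/1]_(1 <= k < d.+1)
            (beta k ^ (os n (d - k).+1 - os n (d - k))%N).

(* Main.v *)
Require Import Defs.
From Stdlib Require Import Reals Lra.
From HB Require Import structures.
From mathcomp Require Import all_boot.
From mathcomp Require Import zify.
Open Scope R_scope.
Set Implicit Arguments. Unset Strict Implicit. Unset Printing Implicit Defensive.
Lemma Rmult_assoc' : associative Rmult. Proof. move=> *; by rewrite Rmult_assoc. Qed.
Lemma Rplus_assoc' : associative Rplus. Proof. move=> *; by rewrite Rplus_assoc. Qed.
HB.instance Definition _ := Monoid.isComLaw.Build R 1 Rmult Rmult_assoc' Rmult_comm Rmult_1_l.
HB.instance Definition _ := Monoid.isComLaw.Build R 0 Rplus Rplus_assoc' Rplus_comm Rplus_0_l.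
HB.instance Definition _ := Monoid.isMulLaw.Build R 0 Rmult Rmult_0_l Rmult_0_r.
HB.instance Definition _ := Monoid.isAddLaw.Build R Rmult Rplus Rmult_plus_distr_r Rmult_plus_distr_l.

Lemma prod_const_nat (a b : nat) (c : R) :
  \big[Rmult/1]_(a <= t < b) c = c ^ (b - a).
Proof.
rewrite big_const_nat; elim: (b - a)%N => [|k IH] //=; by rewrite IH.
Qed.

Fixpoint Rfun (h : nat -> R) (base : nat) (s : seq nat) : R :=
  match s with [::] => 1 | x :: s' => h (size s').+1 ^ (x - base) * Rfun h x s' end.

Lemma R_os h s : forall base,
  \big[Rmult/1]_(1 <= k < (size s).+1)
     (h k ^ (nth 0%N (base :: s) (size s - k).+1 - nth 0%N (base :: s) (size s - k))%N)
  = Rfun h base s.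
Proof.
elim: s => [|x s IH] base /=; first by rewrite big_geq.
rewrite big_nat_recr //= subnn /= Rmult_comm -(IH x); congr (_ * _).
apply: eq_big_nat => k /andP [k1 k2].
by rewrite subSn.
Qed.

Lemma CL_R h (h0 : h 0%N = 1) M : forall s base, path leq base s ->
  (forall y, y \in s -> (y <= M)%N) -> (base <= M)%N ->
  \big[Rmult/1]_(base.+1 <= t < M.+1) h (count (fun y => t <= y)%N s) = Rfun h base s.
Proof.
elim => [|x s IH] base /=.
  move=> _ _ _; rewrite big1 // => t _; by [].
move=> /andP [bx px] sM bM.
have xM : (x <= M)%N by apply: sM; rewrite mem_head.
rewrite (big_cat_nat _ (n := x.+1)); [|by []|by []].
rewrite -(IH x px) //; last by move=> y ys; apply: sM; rewrite in_cons ys orbT.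
congr (_ * _).
  rewrite (eq_big_nat _ _ (F2 := fun _ => h (size s).+1)); first by rewrite prod_const_nat subSS.
  move=> t /andP [_ tx]; rewrite ltnS in tx; rewrite tx /= add1n; congr (h _.+1).
  apply/eqP; rewrite -all_count; apply/allP => y ys.
  have := order_path_min leq_trans px => /allP /(_ y ys) xy.
  exact: leq_trans tx xy.
apply: eq_big_nat => t /andP [xt _].
by rewrite (leqNgt t x) xt.
Qed.

Definition Form (h : nat -> R) (m : nat) (s : seq nat) : R :=
  \big[Rmult/1]_(1 <= k < m.+1) (h k ^ (os s (m - k).+1 - os s (m - k))%N).

Lemma Form_R h s : Form h (size s) s = Rfun h 0 (sort leq s).
Proof. by rewrite /Form /os -R_os size_sort. Qed.

Lemma Form_count h (h0 : h 0%N = 1) s M : (forall y, y \in s -> (y <= M)%N) ->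
  Form h (size s) s = \big[Rmult/1]_(1 <= t < M.+1) h (count (fun y => t <= y)%N s).
Proof.
move=> sM; rewrite Form_R -(@CL_R h h0 M) //.
- apply: eq_bigr => t _; congr h; apply/permP; by rewrite perm_sort.
- rewrite path_min_sorted; first exact: sort_sorted leq_total s.
  by apply/allP.
- by move=> y; rewrite mem_sort; apply: sM.
Qed.

Lemma big_opp (I : Type) (r : seq I) (P : pred I) (F : I -> R) :
  \big[Rplus/0]_(i <- r | P i) (- F i) = - \big[Rplus/0]_(i <- r | P i) F i.
Proof. symmetry; apply: (big_morph Ropp) => [x y|]; ring. Qed.

Lemma alt_sum (T : finType) (D : {set T}) :
  \big[Rplus/0]_(C : {set T} | C \subset D) (-1) ^ #|C| = if D == set0 then 1 else 0.
Proof.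
case: (set_0Vmem D) => [->|[x xD]].
  rewrite eqxx (eq_bigl (pred1 set0)); last by move=> C; rewrite subset0.
  by rewrite big_pred1_eq cards0.
have -> : (D == set0) = false by apply/negbTE/set0Pn; exists x.
pose g := fun C : {set T} => if x \in C then C :\ x else x |: C.
have gK : involutive g.
  move=> C; rewrite /g; case: (boolP (x \in C)) => xC.
    by rewrite setD11 setD1K.
  by rewrite setU11 setU1K.
set S := \big[Rplus/0]_(C : {set T} | C \subset D) (-1) ^ #|C|.
suff : S = - S by lra.
rewrite {1}/S (reindex_inj (inv_inj gK)) -big_opp.
apply: eq_big => C.
  rewrite /g; case: ifP => xC.
    rewrite subDset; suff -> : [set x] :|: D = D by []; by apply/setUidPr; rewrite sub1set.
  by rewrite subUset sub1set xD.
move=> _; rewrite /g; case: ifP => xC.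
  rewrite [in RHS](cardsD1 x C) xC add1n /=; lra.
rewrite cardsU1 xC add1n /=; lra.
Qed.

Lemma iter_plus_const n c : iter n (Rplus c) 0 = INR n * c.
Proof. elim: n => [|n IH]; first by rewrite /=; ring. rewrite iterS IH S_INR; ring. Qed.

Lemma count_index_enum (T : finType) (a : pred T) : count a (index_enum T) = #|a|.
Proof. rewrite cardE -size_filter /enum_mem -enumT /index_enum unlock; by rewrite enumT. Qed.

Lemma card_group (T : finType) (D : {set T}) (f : nat -> R) :
  \big[Rplus/0]_(C : {set T} | C \subset D) f #|C| =
  \big[Rplus/0]_(i < #|D|.+1) (INR 'C(#|D|, i) * f i).
Proof.
rewrite (partition_big (fun C : {set T} => inord #|C| : 'I_#|D|.+1) xpredT) //.
apply: eq_bigr => i _.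
rewrite (eq_bigr (fun _ => f i)); last first.
  move=> C /andP [CD /eqP <-]; rewrite inordK //; rewrite ltnS; exact: subset_leq_card.
rewrite -big_filter big_const_seq.
have -> : forall (s : seq {set T}) c, iter (count predT s) (Rplus c) 0 = INR (size s) * c.
  by move=> s c; rewrite count_predT iter_plus_const.
rewrite size_filter -cards_draws; congr (INR _ * _).
rewrite count_index_enum; apply: eq_card => C; rewrite !inE.
apply/andP/andP => [[CD /eqP <-]|[CD /eqP Ci]]; split => //.
  rewrite inordK // ltnS; exact: subset_leq_card.
by apply/eqP/val_inj => /=; rewrite inordK // ltnS; apply: subset_leq_card.
Qed.

Lemma disjU (T : finType) (I A C : {set T}) :
  [disjoint I & A :|: C] = [disjoint I & A] && [disjoint I & C].
Proof. by rewrite !disjoints_subset setCU subsetI. Qed.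

Lemma IE (T : finType) (w : {set T} -> R) (A B : {set T}) :
  \big[Rplus/0]_(C : {set T} | C \subset B)
     ((-1) ^ #|C| * \big[Rplus/0]_(I : {set T} | [disjoint I & A :|: C]) w I)
  = \big[Rplus/0]_(I : {set T} | [disjoint I & A] && (B \subset I)) w I.
Proof.
rewrite (eq_bigr (fun C => \big[Rplus/0]_(I : {set T}) (if [disjoint I & A :|: C] then (-1) ^ #|C| * w I else 0))); last first.
  move=> C _; rewrite big_distrr /= big_mkcond; apply: eq_bigr => I _; case: ifP => _ //; ring.
rewrite exchange_big /= [RHS]big_mkcond; apply: eq_bigr => I _.
rewrite -big_mkcondr.
transitivity ((\big[Rplus/0]_(C : {set T} | (C \subset B) && [disjoint I & A :|: C]) (-1) ^ #|C|) * w I); first by rewrite big_distrl.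
case dA: [disjoint I & A] => /=.
  rewrite (eq_bigl (fun C : {set T} => C \subset B :\: I)); last first.
    move=> C; rewrite subsetD disjU dA /=; congr (_ && _); exact: disjoint_sym.
  rewrite alt_sum setD_eq0; case: ifP => _; ring.
rewrite big_pred0; first ring.
by move=> C; rewrite disjU dA /= andbF.
Qed.

Lemma nabla_subsets (T : finType) (A B : {set T}) (f : nat -> R) :
  [disjoint A & B] ->
  \big[Rplus/0]_(C : {set T} | C \subset B) ((-1) ^ #|C| * f #|A :|: C|) = nabla #|B| f #|A|.
Proof.
move=> dAB.
rewrite (eq_bigr (fun C : {set T} => (fun i => (-1)^i * f (#|A| + i)%N) #|C|)); last first.
  move=> C CB; rewrite cardsU (disjoint_setI0 (disjointWr CB dAB)) cards0 subn0 //.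
rewrite (@card_group T B (fun i => (-1)^i * f (#|A| + i)%N)) /nabla; apply: eq_bigr => i _; ring.
Qed.

Lemma nabla0 x k : nabla 0 x k = x k.
Proof. rewrite /nabla big_ord1 /= addn0; ring. Qed.

Lemma nabla_succ j x k : nabla j.+1 x k = nabla j x k - nabla j x k.+1.
Proof.
rewrite /nabla big_ord_recl.
rewrite (eq_bigr (fun i : 'I_j.+1 => (-1) ^ i.+1 * INR 'C(j, i.+1) * x (k + i.+1)%N
   + - ((-1)^i * INR 'C(j, i) * x (k.+1 + i)%N))); last first.
  move=> i _; rewrite lift0 binS plus_INR addSnnS; simpl pow; ring.
rewrite big_split big_opp big_ord_recr (bin_small (ltnSn j)).
rewrite [in X in _ = X - _](big_ord_recl j).
rewrite (eq_bigr (fun i : 'I_j => (-1) ^ i.+1 * INR 'C(j, i.+1) * x (k + i.+1)%N) (P := xpredT) (F1 := fun i : 'I_j => (-1) ^ (lift ord0 i) * INR 'C(j, lift ord0 i) * x (k + lift ord0 i)%N)); last by move=> i _; rewrite lift0.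
simpl; rewrite bin0 /=; ring.
Qed.

Lemma binom_nabla x r : forall s,
  \big[Rplus/0]_(i < r.+1) (INR 'C(r, i) * nabla i x (s + (r - i))%N) = x s.
Proof.
elim: r => [|r IH] s.
  rewrite big_ord1 nabla0 addn0; simpl; ring.
rewrite -(IH s) big_ord_recl.
pose G := fun i : nat => INR 'C(r, i) * nabla i x (s + (r.+1 - i))%N.
have E1 : forall i : 'I_r.+1, INR 'C(r.+1, lift ord0 i) * nabla (lift ord0 i) x (s + (r.+1 - lift ord0 i))%N
   = G (lift ord0 i) + INR 'C(r, i) * (nabla i x (s + (r - i))%N - nabla i x (s + (r - i)).+1).
  move=> i; rewrite /G lift0 binS plus_INR subSS nabla_succ; ring.
rewrite (eq_bigr _ (fun i _ => E1 i)) big_split -Rplus_assoc.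
have E2 : forall T0, T0 = G 0%N -> T0 + \big[Rplus/0]_(i < r.+1) G (lift ord0 i) = \big[Rplus/0]_(i < r.+1) G i.
  move=> T0 ->; rewrite -(big_ord_recl r.+1 (fun i : 'I_r.+2 => G i)) big_ord_recr.
  rewrite [G ord_max]/G (bin_small (ltnSn r)) Rmult_0_l Monoid.mulm1.
  by apply: eq_bigr.
rewrite E2; last by rewrite /G !bin0.
rewrite -big_split; apply: eq_bigr => i _; rewrite /G subSn; last by rewrite -ltnS.
rewrite addnS /=; ring.
Qed.

Lemma big_nonneg (I : Type) (r : seq I) (P : pred I) (F : I -> R) :
  (forall i, P i -> 0 <= F i) -> 0 <= \big[Rplus/0]_(i <- r | P i) F i.
Proof. move=> H; apply: (big_ind (fun x => 0 <= x)); [lra| move=> x y; lra | exact: H]. Qed.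

Lemma prod_nonneg (I : Type) (r : seq I) (P : pred I) (F : I -> R) :
  (forall i, P i -> 0 <= F i) -> 0 <= \big[Rmult/1]_(i <- r | P i) F i.
Proof. move=> H; apply: (big_ind (fun x => 0 <= x)); [lra| move=> x y; nra | exact: H]. Qed.

Lemma prod_pos (I : Type) (r : seq I) (P : pred I) (F : I -> R) :
  (forall i, P i -> 0 < F i) -> 0 < \big[Rmult/1]_(i <- r | P i) F i.
Proof. move=> H; apply: (big_ind (fun x => 0 < x)); [lra| move=> x y; nra | exact: H]. Qed.

Lemma ln_prod (I : Type) (r : seq I) (P : pred I) (F : I -> R) :
  (forall i, P i -> 0 < F i) ->
  ln (\big[Rmult/1]_(i <- r | P i) F i) = \big[Rplus/0]_(i <- r | P i) ln (F i).
Proof.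
move=> H.
suff [] : 0 < \big[Rmult/1]_(i <- r | P i) F i /\
   ln (\big[Rmult/1]_(i <- r | P i) F i) = \big[Rplus/0]_(i <- r | P i) ln (F i) by [].
apply: (big_rec2 (fun y1 y2 => 0 < y1 /\ ln y1 = y2)); first by split; [lra|exact: ln_1].
move=> i y1 y2 Pi [y1p <-]; have := H i Pi => Fp; split; first nra.
exact: ln_mult.
Qed.

Lemma exp_sum (I : Type) (r : seq I) (P : pred I) (F : I -> R) :
  exp (\big[Rplus/0]_(i <- r | P i) F i) = \big[Rmult/1]_(i <- r | P i) exp (F i).
Proof. apply: (big_morph exp); [exact: exp_plus | exact: exp_0]. Qed.

Lemma term_le_sum (T : finType) (P : pred T) (F : T -> R) (j : T) :
  (forall i, P i -> 0 <= F i) -> P j -> F j <= \big[Rplus/0]_(i | P i) F i.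
Proof.
move=> H Pj; rewrite (bigD1 j) //=.
have : 0 <= \big[Rplus/0]_(i | P i && (i != j)) F i.
  by apply: big_nonneg => i /andP [Pi _]; apply: H.
lra.
Qed.

Lemma ext_range (H : nat -> R) a M : (a <= M)%N -> (forall t, (a < t)%N -> H t = 1) ->
  \big[Rmult/1]_(1 <= t < a.+1) H t = \big[Rmult/1]_(1 <= t < M.+1) H t.
Proof.
move=> aM H1; rewrite [RHS](big_cat_nat _ (n := a.+1)) //=.
rewrite [X in _ = _ * X](_ : _ = 1) ?Rmult_1_r //.
rewrite big_nat_cond big1 // => t /andP [/andP [ta _] _]; exact: H1.
Qed.

Lemma count_enumT (T : finType) (a : pred T) : count a (enum T) = #|a|.
Proof. rewrite cardE -size_filter enumT; unfold enum_mem; done. Qed.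

Definition Uset m (n : m.-tuple nat) (t : nat) : {set 'I_m} := [set k | (t <= tnth n k)%N].

Lemma card_Uset m (n : m.-tuple nat) t : #|Uset n t| = count (fun y : nat => (t <= y)%N) n.
Proof.
rewrite -[in RHS](map_tnth_enum n) count_map count_enumT.
by apply: eq_card => k; rewrite inE.
Qed.

Definition Wf m (pt : {set 'I_m} -> R) (U : {set 'I_m}) :=
  \big[Rplus/0]_(I : {set 'I_m} | [disjoint I & U]) pt I.

Definition Nf m (p : {set 'I_m} -> R) (U : {set 'I_m}) :=
  \big[Rmult/1]_(I : {set 'I_m} | (I != set0) && ~~ [disjoint I & U]) p I.

Lemma disj_set0 m (I : {set 'I_m}) : [disjoint I & set0].
Proof. by rewrite disjoints_subset setC0 subsetT. Qed.

Lemma set0_disj m (U : {set 'I_m}) : [disjoint set0 & U].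
Proof. by rewrite disjoints_subset sub0set. Qed.

Lemma Uset_big m (n : m.-tuple nat) t : (forall k, tnth n k < t)%N -> Uset n t = set0.
Proof.
move=> H; apply/setP => k; rewrite !inE; apply/negbTE; by rewrite -ltnNge.
Qed.

Lemma wide_rep m pt (n : m.-tuple nat) M : wide_params pt -> (forall k, tnth n k <= M)%N ->
  wide_surv pt n = \big[Rmult/1]_(1 <= t < M.+1) Wf pt (Uset n t).
Proof.
move=> [_ [sum1 _]] nM; rewrite /wide_surv.
have mxM : (\max_(k < m) tnth n k <= M)%N by apply/bigmax_leqP => k _; apply: nM.
rewrite (eq_bigr (fun t => Wf pt (Uset n t))); last first.
  move=> t _; apply: eq_bigl => I.
  apply/forallP/idP => [H|H k].
    rewrite disjoints_subset; apply/subsetP => k kI; rewrite !inE -ltnNge.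
    by have := H k; rewrite kI.
  apply/implyP => kI; move: H; rewrite disjoints_subset => /subsetP /(_ k kI).
  by rewrite !inE -ltnNge.
rewrite (ext_range (H := fun t => Wf pt (Uset n t)) mxM) //.
move=> t mt; rewrite Uset_big; last first.
  by move=> k; apply: leq_ltn_trans mt; apply: leq_bigmax.
by rewrite /Wf (eq_bigl xpredT) // => I; rewrite disj_set0.
Qed.

Lemma pow_prod (c : R) e M : (e <= M)%N ->
  c ^ e = \big[Rmult/1]_(1 <= t < M.+1) (if (t <= e)%N then c else 1).
Proof.
move=> eM; rewrite -(ext_range (H := fun t => if (t <= e)%N then c else 1) eM); last first.
  by move=> t et; rewrite leqNgt et.
rewrite (eq_big_nat _ _ (F2 := fun _ => c)) ?prod_const_nat ?subn1 //.
by move=> t /andP [_ te]; rewrite -ltnS te.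
Qed.

Lemma le_bigmax_disj m (I : {set 'I_m}) (F : 'I_m -> nat) t : (0 < t)%N ->
  (t <= \max_(k in I) F k)%N = ~~ [disjoint I & [set k | t <= F k]%N].
Proof.
move=> t0; apply/idP/idP => [H|].
  apply/negP => dis.
  have : (\max_(k in I) F k <= t.-1)%N.
    apply/bigmax_leqP => k kI.
    move: dis; rewrite disjoints_subset => /subsetP /(_ k kI); rewrite !inE -ltnNge.
    move=> Fk; lia.
  lia.
move=> /negP H; case: (boolP [exists k, (k \in I) && (t <= F k)%N]).
  move=> /existsP [k /andP [kI tk]]; apply: leq_trans tk _; exact: leq_bigmax_cond.
move=> /negP H2; exfalso; apply: H; rewrite disjoints_subset; apply/subsetP => k kI.
rewrite !inE; apply/negP => tk; apply: H2; apply/existsP; exists k; by rewrite kI.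
Qed.

Lemma narrow_rep m p (n : m.-tuple nat) M : (forall k, tnth n k <= M)%N ->
  narrow_surv p n = \big[Rmult/1]_(1 <= t < M.+1) Nf p (Uset n t).
Proof.
move=> nM; rewrite /narrow_surv.
rewrite (eq_bigr (fun I : {set 'I_m} => \big[Rmult/1]_(1 <= t < M.+1)
     (if (t <= \max_(k in I) tnth n k)%N then p I else 1))); last first.
  move=> I _; apply: pow_prod; apply/bigmax_leqP => k _; apply: nM.
rewrite exchange_big /=; apply: eq_big_nat => t /andP [t1 _].
rewrite /Nf -big_mkcondr; apply: eq_bigl => I.
by rewrite le_bigmax_disj.
Qed.

Definition Sq (S : forall m, m.-tuple nat -> R) (s : seq nat) : R := S (size s) (in_tuple s).

Lemma SqE S m (n : m.-tuple nat) : S m n = Sq S n.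
Proof.
case: n => s Hs; rewrite /Sq /=; have E : size s = m by apply/eqP. subst m.
congr (S _ _); exact: val_inj.
Qed.

Lemma Sq_perm G S : geom_family G S -> forall s s', (0 < size s)%N -> perm_eq s s' -> Sq S s = Sq S s'.
Proof.
move=> [fam _] s s' s0 pss.
have Hs' : size s' == size s by rewrite (perm_size pss).
have := (fam _ s0).1 (in_tuple s) (Tuple Hs') pss.
move=> H; rewrite {1}/Sq H; exact: SqE.
Qed.

Lemma Sq_rcons G S : geom_family G S -> forall s, (0 < size s)%N -> Sq S (rcons s 0%N) = Sq S s.
Proof.
move=> [_ cons] s s0.
have := cons _ (in_tuple s) s0; rewrite SqE => H; exact: H.
Qed.

Definition beta S (k : nat) : R := Sq S (rcons (nseq k 1%N) 0%N).

Lemma Sq_ones G S : geom_family G S -> forall k j, Sq S (nseq k 1%N ++ nseq j.+1 0%N) = beta S k.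
Proof.
move=> fam k; elim=> [|j IH]; first by rewrite cats1.
rewrite -(addn1 j.+1) nseqD catA cats1 (Sq_rcons fam) // size_cat !size_nseq; lia.
Qed.

Lemma Sq_ones0 G S : geom_family G S -> forall k, (0 < k)%N -> Sq S (nseq k 1%N) = beta S k.
Proof. by move=> fam k k0; rewrite /beta (Sq_rcons fam) // size_nseq. Qed.

Definition indT m (U : {set 'I_m}) : m.-tuple nat := [tuple (nat_of_bool (k \in U)) | k < m].

Lemma card_Um m (U : {set 'I_m}) : (#|U| <= m)%N.
Proof. by rewrite -[X in (_ <= X)%N]card_ord max_card. Qed.

Lemma cardC_m m (U : {set 'I_m}) : #|~: U| = (m - #|U|)%N.
Proof. have := cardsC U; rewrite card_ord; lia. Qed.

Lemma ind_perm m (U : {set 'I_m}) : perm_eq (indT U) (nseq #|U| 1%N ++ nseq (m - #|U|) 0%N).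
Proof.
apply/permP => a; rewrite count_cat !count_nseq.
rewrite -[in LHS](map_tnth_enum (indT U)) count_map count_enumT.
have -> : #|preim (tnth (indT U)) a| = #|[pred k | if k \in U then a 1%N else a 0%N]|.
  by apply: eq_card => k; rewrite !inE tnth_mktuple; case: (k \in U).
have Um := card_Um U.
case: (a 1%N); case: (a 0%N) => /=.
- have -> : #|[pred k : 'I_m | if k \in U then true else true]| = m.
    by rewrite -[RHS]card_ord; apply: eq_card => k; rewrite !inE; case: (k \in U).
  rewrite ?mul1n ?mul0n ?addn0 ?add0n //; rewrite subnKC //.
- have -> : #|[pred k : 'I_m | if k \in U then true else false]| = #|U|.
    by apply: eq_card => k; rewrite !inE; case: (k \in U).
  rewrite ?mul1n ?mul0n ?addn0 ?add0n //; rewrite subnKC //.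
- have -> : #|[pred k : 'I_m | if k \in U then false else true]| = #|~: U|.
    by apply: eq_card => k; rewrite !inE; case: (k \in U).
  by rewrite cardC_m ?mul1n ?mul0n ?addn0 ?add0n.
- have -> : #|[pred k : 'I_m | if k \in U then false else false]| = 0%N.
    by apply: eq_card0 => k; rewrite !inE; case: (k \in U).
  rewrite ?mul1n ?mul0n ?addn0 ?add0n //; rewrite subnKC //.
Qed.

Lemma Sq_ind G S : geom_family G S -> forall m (U : {set 'I_m}), (0 < m)%N -> Sq S (indT U) = beta S #|U|.
Proof.
move=> fam m U m0.
rewrite (Sq_perm fam (s' := nseq #|U| 1%N ++ nseq (m - #|U|) 0%N)) ?size_tuple ?ind_perm //.
case E: (m - #|U|)%N => [|j]; last exact: (Sq_ones fam).
have Um := card_Um U.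
rewrite cats0 (Sq_ones0 fam) //; lia.
Qed.

Lemma mem_le_sumn s y : y \in s -> (y <= sumn s)%N.
Proof.
elim: s => //= x s IH; rewrite in_cons => /orP [/eqP->|ys]; first exact: leq_addr.
apply: leq_trans (IH ys) _; exact: leq_addl.
Qed.

Lemma tnth_le_sumn m (n : m.-tuple nat) k : (tnth n k <= sumn n)%N.
Proof. apply: mem_le_sumn; exact: mem_tnth. Qed.

Lemma Form_count' h (h0 : h 0%N = 1) m s M : size s = m -> (forall y, y \in s -> (y <= M)%N) ->
  Form h m s = \big[Rmult/1]_(1 <= t < M.+1) h (count (fun y => t <= y)%N s).
Proof. move=> <-; exact: Form_count. Qed.

Lemma forward_form (h : nat -> R) (h0 : h 0%N = 1) m (n : m.-tuple nat) (H : {set 'I_m} -> R) M :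
  (forall U, H U = h #|U|) -> (forall k, tnth n k <= M)%N ->
  \big[Rmult/1]_(1 <= t < M.+1) H (Uset n t) = Form h m n.
Proof.
move=> HU nM; rewrite (Form_count' h0 (M := M)) ?size_tuple //; last first.
  by move=> y /tnthP [k ->].
by apply: eq_bigr => t _; rewrite HU card_Uset.
Qed.

Lemma wide_WU S : geom_family is_wide_geom S -> forall m, (0 < m)%N -> forall pt, wide_params pt ->
  (forall n, S m n = wide_surv pt n) -> forall U, Wf pt U = beta S #|U|.
Proof.
move=> fam m m0 pt par Sw U.
rewrite -(Sq_ind fam U m0) -SqE Sw (wide_rep (M := 1) par).
  rewrite big_nat1; congr Wf; apply/setP => k; rewrite !inE tnth_mktuple; by case: (k \in U).
by move=> k; rewrite tnth_mktuple; case: (k \in U).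
Qed.

Lemma card_first m k : (k <= m)%N -> exists A : {set 'I_m}, #|A| = k.
Proof.
move=> km; exists [set widen_ord km i | i in 'I_k]; rewrite card_imset ?card_ord //.
by move=> x y /(congr1 val) /= /val_inj.
Qed.

Lemma GWE_RHS d (hd : (0 < d)%N) (F : d.-tuple nat -> R) : GWE F -> RHS_W F.
Proof.
move=> [S [fam FS]].
have getpt : forall m, (0 < m)%N -> exists pt, wide_params pt /\ forall n, S m n = wide_surv pt n.
  by move=> m m0; exact: (fam.1 m m0).2.
have b0 : beta S 0 = 1.
  have [pt [par Sw]] := getpt 1%N isT.
  have := wide_WU fam (isT : (0 < 1)%N) par Sw set0; rewrite cards0 => <-.
  rewrite /Wf (eq_bigl xpredT) ?par.2.1 // => I; exact: disj_set0.
exists (beta S); split.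
  split; first exact: b0.
  split.
    have [pt [par Sw]] := getpt 1%N isT.
    have := wide_WU fam (isT : (0 < 1)%N) par Sw [set ord0]; rewrite cards1 => <-.
    rewrite /Wf (eq_bigl (fun I : {set 'I_1} => ord0 \notin I)); first exact: par.2.2.
    by move=> I; rewrite disjoint_sym disjoints1.
  move=> j k.
  case E: (k + j)%N => [|m].
    have -> : j = 0%N by lia.
    have -> : k = 0%N by lia.
    rewrite nabla0 b0; lra.
  have [pt [par Sw]] := getpt m.+1 isT.
  have km : (k <= m.+1)%N by lia.
  have [A cA] := card_first km.
  have cB : #|~: A| = j by rewrite cardC_m; lia.
  have dAB : [disjoint A & ~: A] by rewrite disjoints_subset setCK.
  rewrite -cA -cB -(nabla_subsets _ dAB).
  rewrite (eq_bigr (fun C : {set 'I_m.+1} => (-1) ^ #|C| * Wf pt (A :|: C))); last first.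
    by move=> C _; rewrite (wide_WU fam _ par Sw).
  rewrite /Wf IE; apply: big_nonneg => I _; exact: (par.1 I).1.
move=> n; rewrite FS.
have [pt [par Sw]] := getpt d hd.
rewrite Sw (wide_rep (M := sumn n) par); last exact: tnth_le_sumn.
apply: forward_form; [exact: b0 | move=> U; exact: (wide_WU fam hd par Sw) | exact: tnth_le_sumn].
Qed.

Lemma Form_perm h m (n n' : seq nat) : perm_eq n n' -> Form h m n = Form h m n'.
Proof.
move=> p; rewrite /Form /os.
have -> : sort leq n = sort leq n'.
  by apply/perm_sortP => //; [exact: leq_total|exact: leq_trans|exact: anti_leq].
by [].
Qed.

Lemma Form_rcons h (h0 : h 0%N = 1) m (n : seq nat) : size n = m -> Form h m.+1 (rcons n 0%N) = Form h m n.
Proof.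
move=> sz; rewrite (Form_count' h0 (M := sumn n)) ?size_rcons ?sz //; last first.
  move=> y; rewrite mem_rcons in_cons => /orP [/eqP ->|]; [exact: leq0n| exact: mem_le_sumn].
rewrite (Form_count' h0 (M := sumn n)) //; last exact: mem_le_sumn.
apply: eq_big_nat => t /andP [t1 _]; congr h; rewrite -cats1 count_cat /=.
have -> : (t <= 0)%N = false by case: t t1.
by rewrite addn0 addn0.
Qed.

Lemma WfU_gen x m (U : {set 'I_m}) :
  \big[Rplus/0]_(I : {set 'I_m} | [disjoint I & U]) nabla #|I| x (m - #|I|) = x #|U|.
Proof.
rewrite (eq_bigl (fun I : {set 'I_m} => I \subset ~: U)); last by move=> I; rewrite disjoints_subset.
rewrite (@card_group _ (~: U) (fun i => nabla i x (m - i))) cardC_m.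
have Um := card_Um U.
rewrite -[in RHS](binom_nabla x (m - #|U|) #|U|).
apply: eq_bigr => i _; congr (_ * nabla _ _ _).
have := ltn_ord i; move: (nat_of_ord i) => a; move: Um; move: (#|U|) => u; lia.
Qed.

Lemma RHS_GWE d (F : d.-tuple nat -> R) : RHS_W F -> GWE F.
Proof.
move=> [b [[b0 [b1 bnab]] FS]].
exists (fun m (n : m.-tuple nat) => Form b m n); split; last by move=> n; rewrite FS.
split.
  move=> m m0; split.
    move=> n n' p; exact: Form_perm.
  pose pt := fun I : {set 'I_m} => nabla #|I| b (m - #|I|).
  have WU : forall U, Wf pt U = b #|U| by move=> U; exact: WfU_gen.
  have ptpos : forall I, 0 <= pt I by move=> I; exact: bnab.
  have sum1 : \big[Rplus/0]_(I : {set 'I_m}) pt I = 1.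
    have := WU set0; rewrite cards0 b0 => <-; rewrite /Wf; apply: eq_bigl => I; by rewrite disj_set0.
  have par : wide_params pt.
    split.
      move=> I; split; first exact: ptpos.
      rewrite -sum1; exact: (term_le_sum (P := xpredT)).
    split; first exact: sum1.
    move=> k; have := WU [set k]; rewrite cards1 => E.
    rewrite (eq_bigl (fun I : {set 'I_m} => [disjoint I & [set k]])); first by rewrite -/(Wf pt [set k]) E.
    by move=> I; rewrite disjoint_sym disjoints1.
  exists pt; split => // n.
  rewrite (wide_rep (M := sumn n) par); last exact: tnth_le_sumn.
  symmetry; apply: forward_form; [exact: b0 | exact: WU | exact: tnth_le_sumn].
move=> m n m0 /=; apply: Form_rcons; [exact: b0 | exact: size_tuple].
Qed.

Lemma narrow_NU S : geom_family is_narrow_geom S -> forall m, (0 < m)%N -> forall (p : {set 'I_m} -> R),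
  (forall n, S m n = narrow_surv p n) -> forall U, Nf p U = beta S #|U|.
Proof.
move=> fam m m0 p Sn U.
rewrite -(Sq_ind fam U m0) -SqE Sn (narrow_rep p (M := 1)).
  rewrite big_nat1; congr Nf; apply/setP => k; rewrite !inE tnth_mktuple; by case: (k \in U).
by move=> k; rewrite tnth_mktuple; case: (k \in U).
Qed.

Lemma Nf_split m (p : {set 'I_m} -> R) (U : {set 'I_m}) (k : 'I_m) : k \in U ->
  Nf p U = Nf p [set k] * \big[Rmult/1]_(I : {set 'I_m} | ((I != set0) && ~~ [disjoint I & U]) && (k \notin I)) p I.
Proof.
move=> kU; rewrite /Nf (bigID (fun I : {set 'I_m} => k \in I)) /=; congr (_ * _).
apply: eq_bigl => I; rewrite [[disjoint I & [set k]]]disjoint_sym disjoints1 negbK.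
case kI: (k \in I); rewrite ?andbF ?andbT //.
have -> : ~~ [disjoint I & U] by apply/negP; rewrite disjoints_subset => /subsetP /(_ k kI); rewrite inE kU.
by rewrite andbT.
Qed.

Lemma ln_le0 x : 0 < x <= 1 -> ln x <= 0.
Proof.
move=> [x0 x1]; case: (Rle_lt_or_eq_dec _ _ x1) => [lt|->]; last by rewrite ln_1; lra.
have := ln_increasing x 1 x0 lt; rewrite ln_1; lra.
Qed.

Lemma GNE_RHS2 d (hd : (0 < d)%N) (F : d.-tuple nat -> R) : GNE F -> RHS_N2 F.
Proof.
move=> [npm [S [fam FS]]].
have getp : forall m, (0 < m)%N -> exists p, narrow_params p /\ forall n, S m n = narrow_surv p n.
  by move=> m m0; exact: (fam.1 m m0).2.
have b0 : beta S 0 = 1.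
  have [p [par Sn]] := getp 1%N isT.
  have := narrow_NU fam (isT : (0 < 1)%N) Sn set0; rewrite cards0 => <-.
  rewrite /Nf big_pred0 // => I; by rewrite disj_set0 andbF.
have b1 : beta S 1 < 1.
  have [p [par Sn]] := getp 1%N isT.
  have := narrow_NU fam (isT : (0 < 1)%N) Sn [set ord0]; rewrite cards1 => <-.
  rewrite /Nf (eq_bigl (fun I : {set 'I_1} => (I != set0) && (ord0 \in I))); first exact: par.2 ord0.
  by move=> I; rewrite disjoint_sym disjoints1 negbK.
have bnn : forall c, 0 <= beta S c.
  move=> c; case: c => [|c]; first by rewrite b0; lra.
  have [p [par Sn]] := getp c.+1 isT.
  have := narrow_NU fam (isT : (0 < c.+1)%N) Sn setT; rewrite cardsT card_ord => <-.
  apply: prod_nonneg => I /andP [I0 _]; exact: (par.1 I I0).1.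
have b1pos : 0 < beta S 1.
  case: (Rle_lt_or_eq_dec 0 (beta S 1) (bnn 1%N)) => // E.
  exfalso; apply: npm => n.
  have [p [par Sn]] := getp d hd.
  rewrite FS Sn (narrow_rep p (M := sumn n)); last exact: tnth_le_sumn.
  rewrite /pointmass_surv; case: ifP => [/allP allz | /negP nz].
    rewrite big_nat_cond big1 // => t /andP [/andP [t1 _] _].
    rewrite Uset_big; last first.
      by move=> k; have := allz _ (mem_tnth k n) => /eqP ->.
    rewrite /Nf big_pred0 // => I; by rewrite disj_set0 andbF.
  have [x xn x0] : exists2 x, x \in n & ~~ (x == 0%N) by apply/allPn/negP.
  have [k xk] := tnthP _ _ xn.
  have s1 : (1 < (sumn n).+1)%N by rewrite ltnS; apply: leq_trans (mem_le_sumn xn); rewrite lt0n.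
  rewrite big_ltn // (@Nf_split _ _ _ k); last by rewrite inE -xk lt0n.
  have := narrow_NU fam hd Sn [set k]; rewrite cards1 => ->.
  rewrite -E; ring.
have ppos : forall m, (0 < m)%N -> forall p, narrow_params p -> (forall n, S m n = narrow_surv p n) ->
    forall I, I != set0 -> 0 < p I.
  move=> m m0 p par Sn I I0; have [k kI] := set0Pn I I0.
  have := narrow_NU fam m0 Sn [set k]; rewrite cards1 => E.
  rewrite /Nf (bigD1 I) /= in E; last by rewrite I0 disjoint_sym disjoints1 negbK kI.
  have pI := (par.1 I I0).1.
  case: (Rle_lt_or_eq_dec _ _ pI) => // pI0.
  rewrite -pI0 Rmult_0_l in E; lra.
have bpos : forall c, 0 < beta S c.
  move=> c; case: c => [|c]; first by rewrite b0; lra.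
  have [p [par Sn]] := getp c.+1 isT.
  have := narrow_NU fam (isT : (0 < c.+1)%N) Sn setT; rewrite cardsT card_ord => <-.
  apply: prod_pos => I /andP [I0 _]. exact: (ppos c.+1 isT p par Sn I I0).
exists (beta S); split.
  split; first exact: bpos.
  split; first exact: b0.
  split; first exact: b1.
  move=> k j j0.
  case E: (k + j)%N => [|m]; first lia.
  have [p [par Sn]] := getp m.+1 isT.
  have km : (k <= m.+1)%N by lia.
  have [A cA] := card_first km.
  have cB : #|~: A| = j by rewrite cardC_m; lia.
  have dAB : [disjoint A & ~: A] by rewrite disjoints_subset setCK.
  pose K := \big[Rplus/0]_(I : {set 'I_m.+1} | I != set0) ln (p I).
  pose w := fun I : {set 'I_m.+1} => if I != set0 then - ln (p I) else 0.
  have lnU : forall U : {set 'I_m.+1}, ln (beta S #|U|) = K + \big[Rplus/0]_(I : {set 'I_m.+1} | [disjoint I & U]) w I.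
    move=> U; rewrite -(narrow_NU fam (isT : (0 < m.+1)%N) Sn) /Nf ln_prod; last first.
      by move=> I /andP [I0 _]; exact: (ppos m.+1 isT p par Sn I I0).
    have HK : K = \big[Rplus/0]_(I : {set 'I_m.+1} | (I != set0) && [disjoint I & U]) ln (p I)
                + \big[Rplus/0]_(I : {set 'I_m.+1} | (I != set0) && ~~ [disjoint I & U]) ln (p I).
      by rewrite /K (bigID (fun I : {set 'I_m.+1} => [disjoint I & U])).
    have HW : \big[Rplus/0]_(I : {set 'I_m.+1} | [disjoint I & U]) w I
           = - \big[Rplus/0]_(I : {set 'I_m.+1} | (I != set0) && [disjoint I & U]) ln (p I).
      rewrite /w -big_mkcondr big_opp; congr (- _); apply: eq_bigl => I; by rewrite andbC.
    transitivity (\big[Rplus/0]_(I : {set 'I_m.+1} | (I != set0) && ~~ [disjoint I & U]) ln (p I)); first by [].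
    rewrite HK HW; ring.
  rewrite -cA -cB -(nabla_subsets _ dAB).
  rewrite (eq_bigr (fun C : {set 'I_m.+1} => K * (-1) ^ #|C| + (-1) ^ #|C| * \big[Rplus/0]_(I : {set 'I_m.+1} | [disjoint I & A :|: C]) w I)); last first.
    by move=> C _; rewrite lnU; ring.
  rewrite big_split /= -big_distrr alt_sum.
  have -> : (~: A == set0) = false by apply/negbTE; rewrite -card_gt0 cB.
  rewrite IE Monoid.mulm0 Rplus_0_l; apply: big_nonneg => I _.
  rewrite /w; case: ifP => I0; last lra.
  have := ln_le0 (conj (ppos m.+1 isT p par Sn I I0) (par.1 I I0).2); lra.
move=> n; rewrite FS.
have [p [par Sn]] := getp d hd.
rewrite Sn (narrow_rep p (M := sumn n)); last exact: tnth_le_sumn.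
apply: forward_form; [exact: b0 | move=> U; exact: (narrow_NU fam hd Sn) | exact: tnth_le_sumn].
Qed.

Lemma exp_le1 x : 0 <= x -> exp (- x) <= 1.
Proof.
move=> x0; case: (Rle_lt_or_eq_dec _ _ x0) => [lt|<-]; last by rewrite Ropp_0 exp_0; lra.
have := exp_increasing (- x) 0 ltac:(lra); rewrite exp_0; lra.
Qed.

Lemma RHS2_GNE d (hd : (0 < d)%N) (F : d.-tuple nat -> R) : RHS_N2 F -> GNE F.
Proof.
move=> [b [[bpos [b0 [b1 bnab]]] FS]].
split.
  move=> H.
  have E := H (nseq_tuple d 1%N).
  rewrite FS in E.
  change (Form b d (nseq_tuple d 1%N) = pointmass_surv (nseq_tuple d 1%N)) in E.
  rewrite (Form_count' b0 (M := 1)) ?size_tuple // in E; last first.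
    by move=> y /=; rewrite mem_nseq => /andP [_ /eqP ->].
  rewrite big_nat1 /pointmass_surv /= all_nseq /= count_nseq /= mul1n in E.
  have : d != 0%N by rewrite -lt0n.
  move=> /negbTE dn0; rewrite dn0 /= in E.
  have := bpos d; lra.
exists (fun m (n : m.-tuple nat) => Form b m n); split; last by move=> n; rewrite FS.
split; last first.
  move=> m n m0 /=; apply: Form_rcons; [exact: b0 | exact: size_tuple].
move=> m m0; split.
  move=> n n' p; exact: Form_perm.
pose L := fun i => ln (b i).
pose g := fun I : {set 'I_m} => nabla #|I| L (m - #|I|).
pose p := fun I : {set 'I_m} => exp (- g I).
have NU : forall U, Nf p U = b #|U|.
  move=> U.
  transitivity (exp (- \big[Rplus/0]_(I : {set 'I_m} | (I != set0) && ~~ [disjoint I & U]) g I)).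
    rewrite -big_opp exp_sum; by apply: eq_bigr.
  have H1 : \big[Rplus/0]_(I : {set 'I_m} | (I != set0) && ~~ [disjoint I & U]) g I
          = \big[Rplus/0]_(I : {set 'I_m} | ~~ [disjoint I & U]) g I.
    apply: eq_bigl => I; case: (I =P set0) => [->|] /=; last by [].
    by rewrite set0_disj.
  have H2 : \big[Rplus/0]_(I : {set 'I_m}) g I
          = \big[Rplus/0]_(I : {set 'I_m} | [disjoint I & U]) g I
          + \big[Rplus/0]_(I : {set 'I_m} | ~~ [disjoint I & U]) g I.
    by rewrite (bigID (fun I : {set 'I_m} => [disjoint I & U])).
  have H3 : \big[Rplus/0]_(I : {set 'I_m}) g I = 0.
    have E0 := WfU_gen L (set0 : {set 'I_m}); rewrite cards0 /L b0 ln_1 in E0.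
    rewrite -[X in _ = X]E0 /g; apply: eq_bigl => I; by rewrite disj_set0.
  have H4 := WfU_gen L U.
  have H5 : \big[Rplus/0]_(I : {set 'I_m} | ~~ [disjoint I & U]) g I = - L #|U|.
    have : \big[Rplus/0]_(I : {set 'I_m} | [disjoint I & U]) g I = L #|U| by exact: H4.
    lra.
  rewrite H1 H5 Ropp_involutive /L exp_ln //.
have gnn : forall I : {set 'I_m}, I != set0 -> 0 <= g I.
  by move=> I I0; apply: bnab; rewrite card_gt0.
have par : narrow_params p.
  split.
    move=> I I0; split; first by have := exp_pos (- g I); rewrite /p; lra.
    exact: exp_le1 (gnn I I0).
  move=> k; have := NU [set k]; rewrite cards1 => E.
  rewrite (eq_bigl (fun I : {set 'I_m} => (I != set0) && ~~ [disjoint I & [set k]])); first by rewrite -/(Nf p [set k]) E.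
  by move=> I; rewrite disjoint_sym disjoints1 negbK.
exists p; split => // n.
rewrite (narrow_rep p (M := sumn n)); last exact: tnth_le_sumn.
symmetry; apply: forward_form; [exact: b0 | exact: NU | exact: tnth_le_sumn].
Qed.

Definition bprod (a : nat -> R) (k : nat) : R := \big[Rmult/1]_(1 <= i < k.+1) a i.

Lemma bprodS a k : bprod a k.+1 = bprod a k * a k.+1.
Proof. by rewrite /bprod big_nat_recr. Qed.

Lemma bprod0 a : bprod a 0 = 1.
Proof. by rewrite /bprod big_geq. Qed.

Definition Qf (a : nat -> R) (s : seq nat) : R :=
  \big[Rmult/1]_(1 <= k < (size s).+1) (a k ^ nth 0%N s (size s - k)).

Lemma Rfun_bprod a s : forall base, path leq base s ->
  Rfun (bprod a) base s * bprod a (size s) ^ base = Qf a s.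
Proof.
elim: s => [|x s IH] base /=.
  by move=> _; rewrite bprod0 pow1 /Qf big_geq //; ring.
move=> /andP [bx px].
have E : Qf a (x :: s) = Qf a s * a (size s).+1 ^ x.
  rewrite /Qf /= big_nat_recr //= subnn /=; congr (_ * _).
  by apply: eq_big_nat => k /andP [_ kn]; rewrite subSn.
rewrite E -(IH x px).
transitivity (Rfun (bprod a) x s * bprod a (size s).+1 ^ (x - base + base)).
  rewrite pow_add; ring.
rewrite subnK // bprodS Rpow_mult_distr; ring.
Qed.

Lemma Rfun_ext h1 h2 : (forall k, h1 k = h2 k) -> forall s base, Rfun h1 base s = Rfun h2 base s.
Proof. move=> H; elim=> [|x s IH] base //=; by rewrite H IH. Qed.

Lemma nabla_ext j x y k : (forall i, x i = y i) -> nabla j x k = nabla j y k.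
Proof. move=> H; rewrite /nabla; apply: eq_bigr => i _; by rewrite H. Qed.

Lemma nabla_diff j y k : nabla j.+1 y k = nabla j (fun i => y i - y i.+1) k.
Proof.
rewrite nabla_succ /nabla /Rminus -big_opp -big_split; apply: eq_bigr => i _.
rewrite addSn /=; ring.
Qed.

Lemma N1_formula d (n : d.-tuple nat) a :
  \big[Rmult/1]_(1 <= k < d.+1) (a k ^ os n (d - k).+1) = Qf a (sort leq n).
Proof. by rewrite /Qf size_sort size_tuple. Qed.

Lemma Form_tuple h d (n : d.-tuple nat) : Form h d n = Rfun h 0 (sort leq n).
Proof. by rewrite -Form_R size_tuple. Qed.

Lemma N1_N2 d (F : d.-tuple nat -> R) : RHS_N1 F -> RHS_N2 F.
Proof.
move=> [a [[apos [a1 anab]] FS]].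
have bpos : forall k, 0 < bprod a k.
  move=> k; rewrite /bprod big_nat_cond; apply: prod_pos => i /andP [/andP [i1 _] _].
  by have := apos i.-1; rewrite prednK.
exists (bprod a); split.
  split; first exact: bpos.
  split; first exact: bprod0.
  split; first by rewrite bprodS bprod0 Rmult_1_l.
  move=> k [|j] // _.
  rewrite nabla_diff (nabla_ext _ _ (y := fun i => ln (/ a i.+1))); first exact: anab.
  move=> i; rewrite bprodS ln_mult ?ln_Rinv; try (exact: apos); try (exact: bpos); ring.
move=> n; rewrite FS N1_formula -(Rfun_bprod a (base := 0)); last first.
  rewrite path_min_sorted; first exact: sort_sorted leq_total _.
  by apply/allP.
by rewrite pow_O Rmult_1_r -Form_tuple.
Qed.

Lemma N2_N1 d (F : d.-tuple nat -> R) : RHS_N2 F -> RHS_N1 F.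
Proof.
move=> [b [[bpos [b0 [b1 bnab]]] FS]].
pose a := fun k => b k / b k.-1.
have ba : forall k, bprod a k = b k.
  elim=> [|k IH]; first by rewrite bprod0 b0.
  rewrite bprodS IH /a /=; field; have := bpos k; lra.
exists a; split.
  split.
    move=> k; rewrite /a /=; apply: Rdiv_lt_0_compat; exact: bpos.
  split.
    by rewrite /a /= b0 /Rdiv Rinv_1 Rmult_1_r.
  move=> j k.
  have := bnab k j.+1 isT; rewrite nabla_diff => H.
  rewrite (nabla_ext _ _ (y := fun i => ln (b i) - ln (b i.+1))) //.
  move=> i; rewrite /a /= /Rdiv ln_Rinv; last first.
    apply: Rmult_lt_0_compat; [exact: bpos | apply: Rinv_0_lt_compat; exact: bpos].
  have := bpos i; have := bpos i.+1 => p1 p0.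
  rewrite ln_mult ?ln_Rinv; try lra; by apply: Rinv_0_lt_compat.
move=> n; rewrite FS N1_formula -(Rfun_bprod a (base := 0)); last first.
  rewrite path_min_sorted; first exact: sort_sorted leq_total _.
  by apply/allP.
rewrite pow_O Rmult_1_r -/(Form b d n) Form_tuple.
by apply: Rfun_ext => k; rewrite ba.
Qed.


Unset Implicit Arguments.
Theorem corollary4p1 (d : nat) (hd : (0 < d)%N) :
  (forall F : d.-tuple nat -> R, GNE F <-> RHS_N1 F) /\
  (forall F : d.-tuple nat -> R, GNE F <-> RHS_N2 F) /\
  (forall F : d.-tuple nat -> R, GWE F <-> RHS_W F).
Proof.
split; [|split].
- move=> F; split => H.
    apply: N2_N1; apply: (GNE_RHS2 hd); exact: H.
  apply: (RHS2_GNE hd); apply: N1_N2; exact: H.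
- move=> F; split => H; [apply: (GNE_RHS2 hd); exact: H | apply: (RHS2_GNE hd); exact: H].
- move=> F; split => H; [apply: (GWE_RHS hd); exact: H | apply: RHS_GWE; exact: H].
Qed.
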